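(* Let $w\in S_n$ be minimal non-separable. If $w(1)<w(n)$, then $w(i)>w(n)$ for $2\leq i\leq n+1-w(n)$; $w(1)<w(i)<w(n)$ for $n+2-w(n)\leq i\leq n-w(1)$; and $w(i)<w(1)$ for $n-w(1)+1\leq i\leq n-1$. Likewise, if $w(1)>w(n)$, then $w(i)<w(n)$ for $2\leq i\leq w(n)$; $w(n)<w(i)<w(1)$ for $w(n)+1\leq i\leq w(1)-1$; and $w(i)>w(1)$ for $w(1)\leq i\leq n-1$.
   Context: A permutation $w\in S_n$ is separable if it avoids the patterns $3142$ and $2413$: there are no indices $i_1<i_2<i_3<i_4$ such that $w(i_1)w(i_2)w(i_3)w(i_4)$ is in the same relative order as $3142$ or $2413$. For $J\subsetneq\{1,\dots,n-1\}$ (indexing the adjacent transpositions $s_i=(i,i+1)$), partition $\{1,\dots,n\}$ into maximal blocks of consecutive positions where $i$ and $i+1$ lie in the same block iff $i\in J$; $w_J$ (the component of $w$ in the parabolic subgroup $W_J$ in the factorization $w=w^Jw_J$) is separable iff for each block, the sequence of values of $w$ on that block, standardized to a permutation, is separable. $w$ is minimal non-separable if $w$ is not separable but $w_J$ is separable for every $J\subsetneq\{1,\dots,n-1\}$. *)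

(* Defs.v *)
From mathcomp Require Import all_boot all_fingroup.
Set Implicit Arguments. Unset Strict Implicit. Unset Printing Implicit Defensive.

Definition wseq (n : nat) (w : 'S_n) : seq nat := [seq (w i).+1 | i <- enum 'I_n].

(* w(i) for 1-based position i (1 <= i <= n). *)
Definition wv (n : nat) (w : 'S_n) (i : nat) : nat := nth 0 (wseq w) i.-1.

(* A sequence avoids 3142 and 2413 (0-based positions into s). *)
Definition separable (s : seq nat) : Prop :=
  ~ exists i1 i2 i3 i4 : nat,
      [/\ i1 < i2, i2 < i3, i3 < i4 & i4 < size s] /\
      (let a := nth 0 s i1 in let b := nth 0 s i2 in
       let c := nth 0 s i3 in let d := nth 0 s i4 in
       (b < d < a /\ a < c)        (* 3142 *)
       \/ (c < a < d /\ d < b)).   (* 2413 *)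

Definition std (s : seq nat) : seq nat :=
  [seq (count (fun y => y < x) s).+1 | x <- s].

(* Position p (1 <= p <= n-1), i.e. the transposition s_p, belongs to J,
   where J : {set 'I_n.-1} and j : 'I_n.-1 encodes s_(j+1). *)
Definition inJ (n : nat) (J : {set 'I_n.-1}) (p : nat) : bool :=
  [exists j : 'I_n.-1, (j \in J) && (j.+1 == p)].

Definition is_block (n : nat) (J : {set 'I_n.-1}) (a b : nat) : Prop :=
  [&& 1 <= a, a <= b, b <= n,
      (a == 1) || ~~ inJ J a.-1 &
      (b == n) || ~~ inJ J b] /\
  (forall p, a <= p < b -> inJ J p).

Definition wblock (n : nat) (w : 'S_n) (a b : nat) : seq nat :=
  [seq wv w i | i <- iota a (b.+1 - a)].

Definition parabolic_separable (n : nat) (w : 'S_n) (J : {set 'I_n.-1}) : Prop :=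
  forall a b, is_block J a b -> separable (std (wblock w a b)).

Definition min_nonseparable (n : nat) (w : 'S_n) : Prop :=
  ~ separable (wseq w) /\
  forall J : {set 'I_n.-1}, J != setT -> parabolic_separable w J.

(* Main.v *)
Require Import Defs.
From mathcomp Require Import all_boot all_fingroup.
From mathcomp Require Import zify.
From Stdlib Require Import Classical_Prop.
Set Implicit Arguments. Unset Strict Implicit. Unset Printing Implicit Defensive.

Definition bad (a b c d : nat) : Prop := (b < d < a /\ a < c) \/ (c < a < d /\ d < b).

Lemma countL (P : pred nat) m k lo hi : m <= lo -> hi <= m + k ->
  (forall y, lo <= y < hi -> P y) -> hi - lo <= count P (iota m k).
Proof.
elim: k m lo => [|k IH] m lo H1 H2 H3 /=; first lia.
case: (ltnP lo hi) => Hlh; last lia.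
case: (eqVneq lo m) => [E|NE].
- subst lo. rewrite H3 ?leqnn //=.
  have := IH m.+1 m.+1 (leqnn _). rewrite addSnnS => /(_ H2).
  have H4 : (forall y, m.+1 <= y < hi -> P y) by move=> y Hy; apply: H3; lia.
  move=> /(_ H4); lia.
- have := IH m.+1 lo. rewrite addSnnS => /(_ _ H2 H3). lia.
Qed.

Lemma countU (P : pred nat) m k lo hi :
  (forall y, m <= y < m + k -> P y -> lo <= y < hi) -> count P (iota m k) <= hi - lo.
Proof.
elim: k m lo => [|k IH] m lo H /=; first lia.
case Pm: (P m) => /=.
- have := H m; rewrite Pm => /(_ _ isT) Hm.
  have := IH m.+1 m.+1.
  have H4 : (forall y, m.+1 <= y < m.+1 + k -> P y -> m.+1 <= y < hi).
    move=> y Hy Py. have := H y. rewrite Py; move=> /(_ _ isT); lia.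
  move=> /(_ H4); lia.
- apply: IH => y Hy Py; apply: H => //; lia.
Qed.

Lemma count_gt n d : d <= n -> count (fun v => d < v) (iota 1 n) = n - d.
Proof.
move=> Hd; apply/eqP; rewrite eqn_leq; apply/andP; split.
- have := @countU (fun v => d < v) 1 n d.+1 n.+1; rewrite subSS; apply => y Hy Py; lia.
- have := @countL (fun v => d < v) 1 n d.+1 n.+1; rewrite subSS; apply; lia.
Qed.

Lemma count_lt n a : a <= n.+1 -> count (fun v => v < a) (iota 1 n) = a - 1.
Proof.
move=> Hd; apply/eqP; rewrite eqn_leq; apply/andP; split.
  have := @countU (fun v => v < a) 1 n 1 a; apply => y Hy Py; lia.
- have := @countL (fun v => v < a) 1 n 1 a; apply; lia.
Qed.

Lemma core n (f : nat -> nat) :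
  (forall x, 1 <= x <= n -> 1 <= f x <= n) ->
  (forall x y, 1 <= x <= n -> 1 <= y <= n -> f x = f y -> x = y) ->
  (forall P : pred nat, count (fun y => P (f y)) (iota 1 n) = count P (iota 1 n)) ->
  (forall p1 p2 p3 p4, 1 <= p1 -> p1 < p2 -> p2 < p3 -> p3 < p4 -> p4 <= n ->
      bad (f p1) (f p2) (f p3) (f p4) -> p1 = 1 /\ p4 = n) ->
  (exists p1 p2 p3 p4, [/\ 1 <= p1, p1 < p2, p2 < p3, p3 < p4 & p4 <= n] /\
      bad (f p1) (f p2) (f p3) (f p4)) ->
  f 1 < f n ->
     (forall i, 2 <= i <= n + 1 - f n -> f i > f n) /\
     (forall i, n + 2 - f n <= i <= n - f 1 -> f 1 < f i < f n) /\
     (forall i, n - f 1 + 1 <= i <= n - 1 -> f i < f 1).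
Proof.
move=> Hr Hi Hc Hmin [p1 [p2 [p3 [p4 [[H1 H2 H3 H4 H5] Hb]]]]] Had.
have [E1 E4] := Hmin _ _ _ _ H1 H2 H3 H4 H5 Hb. subst p1 p4.
have Hbad : f p3 < f 1 /\ f n < f p2.
  case: Hb => [[/andP[? ?] ?]|[/andP [? ?] ?]]; lia.
case: Hbad => Hj Hi2.
set a := f 1 in Had Hj *. set d := f n in Had Hi2 *.
have ra := Hr 1. have rd := Hr n.
have rn : 4 <= n by lia.
have Ha1 : forall x, 1 < x <= n -> f x <> a.
  move=> x Hx E; have := Hi x 1; rewrite E; move=> /(_ _ _ erefl); lia.
have Hdn : forall x, 1 <= x < n -> f x <> d.
  move=> x Hx E; have := Hi x n; rewrite E; move=> /(_ _ _ erefl); lia.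
have BSB : forall x y z, 1 < x -> x < y -> y < z -> z < n ->
    d < f x -> f y < a -> d < f z -> False.
  move=> x y z ? ? ? ? ? ? ?.
  case: (ltngtP (f x) (f z)) => Hxz.
  - have := Hmin x y z n; rewrite /bad; move=> /(_ _ _ _ _ _ _)[]; try lia.
  - have := Hmin 1 x y z; rewrite /bad; move=> /(_ _ _ _ _ _ _)[]; try lia.
  - have := Hi x z; lia.
have SBS : forall x y z, 1 < x -> x < y -> y < z -> z < n ->
    f x < a -> d < f y -> f z < a -> False.
  move=> x y z ? ? ? ? ? ? ?.
  case: (ltngtP (f x) (f z)) => Hxz.
  - have := Hmin 1 x y z; rewrite /bad; move=> /(_ _ _ _ _ _ _)[]; try lia.
  - have := Hmin x y z n; rewrite /bad; move=> /(_ _ _ _ _ _ _)[]; try lia.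
  - have := Hi x z; lia.
have C1 : forall p q, 1 < p -> p < q -> q < n -> f p < a -> d < f q -> False.
  move=> p q ? ? ? ? ?.
  case: (ltngtP p p2) => Hp.
  - by apply: (SBS p p2 p3) => //; lia.
  - by apply: (BSB p2 p q) => //; lia.
  - subst; lia.
have C2 : forall p q, 1 < p -> p < q -> q < n -> a < f p < d -> d < f q -> False.
  move=> p q ? ? ? ? ?.
  case: (ltngtP q p3) => Hq.
  - have := Hmin p q p3 n; rewrite /bad; move=> /(_ _ _ _ _ _ _)[]; try lia.
  - by apply: (C1 p3 q) => //; lia.
  - subst; lia.
have C3 : forall p q, 1 < p -> p < q -> q < n -> f p < a -> a < f q < d -> False.
  move=> p q ? ? ? ? ?.
  case: (ltngtP p p2) => Hp.
  - by apply: (C1 p p2) => //; lia.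
  - have := Hmin 1 p2 p q; rewrite /bad; move=> /(_ _ _ _ _ _ _)[]; try lia.
  - subst; lia.
have cB : count (fun y => d < f y) (iota 1 n) = n - d.
  by rewrite (Hc (fun v => d < v)) count_gt //; lia.
have cS : count (fun y => f y < a) (iota 1 n) = a - 1.
  by rewrite (Hc (fun v => v < a)) count_lt //; lia.
split; [|split].
- move=> x Hx. case: (ltnP d (f x)) => // Hfx.
  have Hx2 : f x < d by have := Hdn x; lia.
  have := @countU (fun y => d < f y) 1 n 2 x.
  have Hsub : forall y, 1 <= y < 1 + n -> d < f y -> 2 <= y < x.
    move=> y Hy Hy2.
    case: (ltnP y x) => Hyx; first by case: (eqVneq y 1) => [E|]; [subst; lia| lia].
    case: (eqVneq y n) => [E|NE]; first by subst; lia.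
    case: (eqVneq y x) => [E|NE2]; first by subst; lia.
    have := Hr x; have := Ha1 x.
    case: (ltnP (f x) a) => Hxa.
    + move=> *; exfalso; apply: (C1 x y); lia.
    + move=> *; exfalso; apply: (C2 x y); lia.
  move=> /(_ Hsub); lia.
- move=> x Hx. have := Ha1 x; have := Hdn x; have := Hr x.
  case: (ltngtP (f x) d) => Hxd; last (move=> *; lia).
  + case: (ltngtP (f x) a) => Hxa; last (move=> *; lia); last by move=> *; lia.
    move=> *; exfalso.
    have := @countL (fun y => f y < a) 1 n x n.
    have Hsub : forall y, x <= y < n -> f y < a.
      move=> y Hy. case: (eqVneq y x) => [->//|NE].
      have := Hr y; have := Ha1 y; have := Hdn y; move=> h1 h2 h3.
      case: (ltnP (f y) a) => // Hya; exfalso.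
      case: (ltnP d (f y)) => Hyd.
      * apply: (C1 x y); lia.
      * apply: (C3 x y); lia.
    move=> /(_ _ _ Hsub); lia.
  + move=> *; exfalso.
    have := @countL (fun y => d < f y) 1 n 2 x.+1.
    have Hsub : forall y, 2 <= y < x.+1 -> d < f y.
      move=> y Hy. case: (eqVneq y x) => [->//|NE].
      have := Hr y; have := Ha1 y; have := Hdn y; move=> h1 h2 h3.
      case: (ltnP d (f y)) => // Hyd; exfalso.
      case: (ltnP (f y) a) => Hya.
      * apply: (C1 y x); lia.
      * apply: (C2 y x); lia.
    move=> /(_ _ _ Hsub); lia.
- move=> x Hx. case: (ltnP (f x) a) => // Hfx.
  have Hx2 : a < f x by have := Ha1 x; lia.
  have := @countU (fun y => f y < a) 1 n x.+1 n.
  have Hsub : forall y, 1 <= y < 1 + n -> f y < a -> x.+1 <= y < n.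
    move=> y Hy Hy2.
    case: (ltnP x y) => Hyx.
      by case: (eqVneq y n) => [E|]; [subst; lia| lia].
    case: (eqVneq y 1) => [E|NE]; first by subst; lia.
    case: (eqVneq y x) => [E|NE2]; first by subst; lia.
    have := Hr x; have := Hdn x.
    case: (ltnP d (f x)) => Hxa.
    + move=> *; exfalso; apply: (C1 y x); lia.
    + move=> *; exfalso; apply: (C3 y x); lia.
  move=> /(_ Hsub); lia.
Qed.

Lemma rev_map_iota n : map (fun v => n.+1 - v) (iota 1 n) = rev (iota 1 n).
Proof.
apply: (@eq_from_nth _ 0); first by rewrite size_map size_rev.
rewrite size_map size_iota => k Hk.
rewrite (nth_map 0) ?size_iota // nth_rev ?size_iota // !nth_iota //; lia.
Qed.

Lemma count_std_lt (s : seq nat) x y : x \in s -> x < y ->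
  count (fun z => z < x) s < count (fun z => z < y) s.
Proof.
move=> xs xy.
have := count_predUI (fun z => z < x) (fun z => x <= z < y) s.
rewrite (@eq_count _ (predI _ _) pred0); last by move=> z /=; lia.
rewrite (@eq_count _ (predU _ _) (fun z => z < y)); last by move=> z /=; lia.
rewrite count_pred0 addn0 => ->.
have : 0 < count (fun z => x <= z < y) s.
  by rewrite -has_count; apply/hasP; exists x => //; lia.
lia.
Qed.

Lemma sep_std s : separable (std s) -> separable s.
Proof.
move=> H [i1 [i2 [i3 [i4 [[h1 h2 h3 h4] Hb]]]]]; apply: H.
have s4 : i4 < size s by []. exists i1, i2, i3, i4; split; first by rewrite size_map.
have g := fun k (hk : k < size s) => @nth_map _ 0 _ 0 (fun x => (count (fun y => y < x) s).+1) k s hk.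
rewrite /std /= !g; try lia.
have m := fun k (hk : k < size s) => @mem_nth _ 0 s k hk.
have L := fun k l (hk : k < size s) (xl : nth 0 s k < l) => count_std_lt (m k hk) xl.
have s1 : i1 < size s by lia. have s2 : i2 < size s by lia.
have s3 : i3 < size s by lia.
move: Hb => /= [[/andP[b1 b2] b3]|[/andP[b1 b2] b3]].
- left. have := L i2 _ s2 b1; have := L i4 _ s4 b2; have := L i1 _ s1 b3. move=> q1 q2 q3; rewrite !ltnS; split; [apply/andP; split|]; assumption.
- right. have := L i3 _ s3 b1; have := L i1 _ s1 b2; have := L i4 _ s4 b3. move=> q1 q2 q3; rewrite !ltnS; split; [apply/andP; split|]; assumption.
Qed.

Lemma sep_block n (w : 'S_n) a b : separable (std (wblock w a b)) ->
  forall p1 p2 p3 p4, a <= p1 -> p1 < p2 -> p2 < p3 -> p3 < p4 -> p4 <= b ->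
  ~ bad (wv w p1) (wv w p2) (wv w p3) (wv w p4).
Proof.
move=> /sep_std H p1 p2 p3 p4 h1 h2 h3 h4 h5 Hb; apply: H.
have E : forall k, k < b.+1 - a -> nth 0 (wblock w a b) k = wv w (a + k).
  by move=> k hk; rewrite /wblock (nth_map 0) ?size_iota // nth_iota.
exists (p1 - a), (p2 - a), (p3 - a), (p4 - a); split.
  rewrite /wblock size_map size_iota; split; lia.
rewrite /= !E; try lia.
rewrite !subnKC; try lia.
exact: Hb.
Qed.

Lemma wseq_size n (w : 'S_n) : size (wseq w) = n.
Proof. by rewrite /wseq size_map size_enum_ord. Qed.

Lemma wseq_perm n (w : 'S_n) : perm_eq (wseq w) (iota 1 n).
Proof.
apply: uniq_perm; last 1 first.
- move=> x; rewrite mem_iota; apply/idP/idP.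
  + by move=> /mapP [i _ ->]; have := ltn_ord (w i); lia.
  + move=> Hx. have Hk : x.-1 < n by lia.
    apply/mapP; exists ((w^-1)%g (Ordinal Hk)); first by rewrite mem_enum.
    by rewrite permKV /=; lia.
- rewrite map_inj_uniq ?enum_uniq // => i j [] /val_inj; exact: perm_inj.
- exact: iota_uniq.
Qed.

Lemma wseq_map n (w : 'S_n) : map (wv w) (iota 1 n) = wseq w.
Proof.
apply: (@eq_from_nth _ 0); first by rewrite size_map size_iota wseq_size.
rewrite size_map size_iota => k Hk.
by rewrite (nth_map 0) ?size_iota // nth_iota // /wv add1n.
Qed.

Lemma derive n (f : nat -> nat) : perm_eq (map f (iota 1 n)) (iota 1 n) ->
  [/\ (forall x, 1 <= x <= n -> 1 <= f x <= n),
      (forall x y, 1 <= x <= n -> 1 <= y <= n -> f x = f y -> x = y) &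
      (forall P : pred nat, count (fun y => P (f y)) (iota 1 n) = count P (iota 1 n))].
Proof.
move=> Hp; split.
- move=> x Hx. have : f x \in iota 1 n.
    by rewrite -(perm_mem Hp); apply: map_f; rewrite mem_iota; lia.
  rewrite mem_iota; lia.
- move=> x y Hx Hy E.
  have U := perm_uniq Hp. rewrite iota_uniq in U.
  have := nth_uniq 0 (_ : x.-1 < size (map f (iota 1 n))) (_ : y.-1 < size (map f (iota 1 n))) U.
  rewrite size_map size_iota !(nth_map 0) ?size_iota ?nth_iota; try lia.
  have -> : 1 + x.-1 = x by lia. have -> : 1 + y.-1 = y by lia.
  rewrite E eqxx => /(_ _ _)/esym/eqP; lia.
- by move=> P; rewrite -(count_map f P) (seq.permP Hp).
Qed.


Theorem lemma6p3 (n : nat) (w : 'S_n) :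
  min_nonseparable w ->
  (wv w 1 < wv w n ->
     (forall i, 2 <= i <= n + 1 - wv w n -> wv w i > wv w n) /\
     (forall i, n + 2 - wv w n <= i <= n - wv w 1 -> wv w 1 < wv w i < wv w n) /\
     (forall i, n - wv w 1 + 1 <= i <= n - 1 -> wv w i < wv w 1)) /\
  (wv w 1 > wv w n ->
     (forall i, 2 <= i <= wv w n -> wv w i < wv w n) /\
     (forall i, wv w n + 1 <= i <= wv w 1 - 1 -> wv w n < wv w i < wv w 1) /\
     (forall i, wv w 1 <= i <= n - 1 -> wv w i > wv w 1)).
Proof.
move=> [Hns HJ].
have Hp : perm_eq (map (wv w) (iota 1 n)) (iota 1 n) by rewrite wseq_map wseq_perm.
have [Hr Hi Hc] := derive Hp.
have Hex : exists p1 p2 p3 p4, [/\ 1 <= p1, p1 < p2, p2 < p3, p3 < p4 & p4 <= n] /\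
      bad (wv w p1) (wv w p2) (wv w p3) (wv w p4).
  apply: NNPP => Hn; apply: Hns => -[i1 [i2 [i3 [i4 [[h1 h2 h3 h4] Hb]]]]].
  apply: Hn; exists i1.+1, i2.+1, i3.+1, i4.+1; split.
    by rewrite wseq_size in h4; split; lia.
  exact: Hb.
have Hmin : forall p1 p2 p3 p4, 1 <= p1 -> p1 < p2 -> p2 < p3 -> p3 < p4 -> p4 <= n ->
      bad (wv w p1) (wv w p2) (wv w p3) (wv w p4) -> p1 = 1 /\ p4 = n.
  move=> p1 p2 p3 p4 h1 h2 h3 h4 h5 Hb.
  have n1 : 0 < n.-1 by lia.
  split.
  - case: (eqVneq p1 1) => // Hne; exfalso.
    pose J0 := [set j : 'I_n.-1 | val j != 0].
    have HJ0 : J0 != setT.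
      apply/eqP => E. have := in_setT (Ordinal n1). by rewrite -E inE.
    have Hbl : is_block J0 2 n.
      split.
      + apply/and5P; split; try lia.
        rewrite /=. apply/negP => /existsP [[m hm] /andP []]; rewrite inE /=; lia.
      + move=> p Hp'. apply/existsP. have hj : p.-1 < n.-1 by lia.
        exists (Ordinal hj); rewrite inE /=; lia.
    apply: (sep_block (HJ J0 HJ0 2 n Hbl) _ h2 h3 h4 h5 Hb); lia.
  - case: (eqVneq p4 n) => // Hne; exfalso.
    have n2 : n - 2 < n.-1 by lia.
    pose J1 := [set j : 'I_n.-1 | val j != n - 2].
    have HJ1 : J1 != setT.
      apply/eqP => E. have := in_setT (Ordinal n2). by rewrite -E inE /= eqxx.
    have Hbl : is_block J1 1 (n - 1).
      split.
      + apply/and5P; split; try lia.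
        apply/orP; right. apply/negP => /existsP [[m hm] /andP []]; rewrite inE /=; lia.
      + move=> p Hp'. apply/existsP. have hj : p.-1 < n.-1 by lia.
        exists (Ordinal hj); rewrite inE /=; lia.
    apply: (sep_block (HJ J1 HJ1 1 (n - 1) Hbl) h1 h2 h3 h4 _ Hb); lia.
split.
- exact: core Hr Hi Hc Hmin Hex.
- move=> Hlt.
  pose g := fun i => n.+1 - wv w i.
  have Hrg : forall x, 1 <= x <= n -> 1 <= g x <= n by move=> x /Hr; rewrite /g; lia.
  have Hig : forall x y, 1 <= x <= n -> 1 <= y <= n -> g x = g y -> x = y.
    move=> x y hx hy; rewrite /g => E; apply: Hi => //.
    have := Hr x hx; have := Hr y hy; lia.
  have Hcg : forall P : pred nat, count (fun y => P (g y)) (iota 1 n) = count P (iota 1 n).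
    move=> P; rewrite /g (Hc (fun v => P (n.+1 - v))).
    by rewrite -(count_map (fun v => n.+1 - v) P) rev_map_iota count_rev.
  have Hming : forall p1 p2 p3 p4, 1 <= p1 -> p1 < p2 -> p2 < p3 -> p3 < p4 -> p4 <= n ->
      bad (g p1) (g p2) (g p3) (g p4) -> p1 = 1 /\ p4 = n.
    move=> p1 p2 p3 p4 h1 h2 h3 h4 h5 Hb; apply: (Hmin p1 p2 p3 p4) => //.
    have := Hr p1; have := Hr p2; have := Hr p3; have := Hr p4.
    move: Hb; rewrite /bad /g; lia.
  have Hexg : exists p1 p2 p3 p4, [/\ 1 <= p1, p1 < p2, p2 < p3, p3 < p4 & p4 <= n] /\
      bad (g p1) (g p2) (g p3) (g p4).
    case: Hex => p1 [p2 [p3 [p4 [[h1 h2 h3 h4 h5] Hb]]]].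
    exists p1, p2, p3, p4; split; first by split.
    have := Hr p1; have := Hr p2; have := Hr p3; have := Hr p4.
    move: Hb; rewrite /bad /g; lia.
  have n1 : 1 <= n by case: Hex => p1 [p2 [p3 [p4 [[h1 h2 h3 h4 h5] _]]]]; lia.
  have Hltg : g 1 < g n by have := Hr 1; have := Hr n; rewrite /g; lia.
  have [A [B C]] := core Hrg Hig Hcg Hming Hexg Hltg.
  have r1 := Hr 1; have rn := Hr n.
  split; [|split].
  + move=> i Hi'. have := A i; have := Hr i; rewrite /g; lia.
  + move=> i Hi'. have := B i; have := Hr i; rewrite /g; lia.
  + move=> i Hi'. have := C i; have := Hr i; rewrite /g; lia.
Qed.
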